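(* Let $d\ge2$, $n\ge1$, $d\le t\le dn$, and let $\gamma$ be a positive conductivity on the lattice graph below. Suppose $\mathbf u\in\mathbb R^{L_t^{\mathcal S}\cup J_{t-1}^{\mathcal S}}$ satisfies $\sum_{q\in\mathcal N(p)}\gamma_{pq}(\mathbf u_q-\mathbf u_p)=0$ for all $p\in L_{t-1}^{\mathcal S}$, $\mathbf u=0$ on $J_{t-1}^{\mathcal S}$, and $\gamma_{bq_b}(\mathbf u_{q_b}-\mathbf u_b)=0$ for all $b\in J_{t-1}^{\mathcal S}$. Then $\mathbf u=0$.
   Context: Lattice: $D=\{x\in\mathbb Z^d:1\le x_i\le n\ \forall i\}$, $\partial D=\{p\in\mathbb Z^d:\min_{q\in D}\|q-p\|_{\ell^1}=1\}$; $E$ = unordered pairs $pq\subseteq D\cup\partial D$ with $\|p-q\|_{\ell^1}=1$, not both in $\partial D$; $\mathcal N(p)=\{q:pq\in E\}$; each $b\in\partial D$ has exactly one neighbour $q_b$, which lies in $D$. Conductivity $\gamma:E\to(0,\infty)$, symmetric. With $s(x)=\sum_ix_i$: $L_t^{\mathcal S}=\{x\in D:s(x)\le t\}$, $K_t^+=\{x\in\partial D:s(x)=t,\max_ix_i=n+1\}$, $K_t^-=\{x\in\partial D:s(x)=t,\min_ix_i=0\}$, $K_t^{\mathcal S\pm}=\bigcup_{\ell\le t}K_\ell^\pm$, $J_t^{\mathcal S}=K_t^{\mathcal S-}\cup K_{t+1}^{\mathcal S+}$. (All neighbours of nodes of $L_{t-1}^{\mathcal S}$, and all $q_b$ with $b\in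 J_{t-1}^{\mathcal S}$, lie in $L_t^{\mathcal S}\cup J_{t-1}^{\mathcal S}$.) *)

(* Defs.v *)
From mathcomp Require Import all_boot all_order all_algebra.
Unset Implicit Arguments.
Import Order.TTheory GRing.Theory Num.Theory.

(* Points of Z^d with all coordinates in {0,...,n+1}; this box contains
   D and its l1-boundary dD. Coordinates are read as nats. *)
Definition pt (d n : nat) := {ffun 'I_d -> 'I_n.+2}.

Section Lattice.
Variables d n : nat.
Implicit Types x y p q b : pt d n.

Definition l1dist x y : nat :=
  \sum_(i < d) ((x i - y i) + (y i - x i))%N.

Definition inD x : bool := [forall i, (1 <= x i <= n)%N].

(* dD = {p : min_{q in D} ||q - p||_1 = 1} *)
Definition inBd p : bool :=
  [exists q, inD q && (l1dist q p == 1%N)] &&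
  [forall q, inD q ==> (1 <= l1dist q p)%N].

Definition inV x : bool := inD x || inBd x.

Definition edge p q : bool :=
  [&& inV p, inV q, l1dist p q == 1%N & ~~ (inBd p && inBd q)].

Definition ssum x : nat := \sum_(i < d) (x i : nat).

Definition inL (t : nat) x : bool := inD x && (ssum x <= t)%N.

Definition inKp (t : nat) x : bool :=
  [&& inBd x, ssum x == t & \max_(i < d) (x i : nat) == n.+1].
Definition inKm (t : nat) x : bool :=
  [&& inBd x, ssum x == t & [exists i, (x i : nat) == 0%N]].

Definition inKSp (t : nat) x : bool := [exists l : 'I_t.+1, inKp l x].
Definition inKSm (t : nat) x : bool := [exists l : 'I_t.+1, inKm l x].

Definition inJ (t : nat) x : bool := inKSm t x || inKSp t.+1 x.

End Lattice.

(* Main.v *)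
Require Import Defs.
From mathcomp Require Import all_boot all_order all_algebra zify.
Import Order.TTheory GRing.Theory Num.Theory.

Section H.
Variables d n : nat.
Local Notation pt := (pt d n).
Local Notation inD := (inD d n).
Local Notation inBd := (inBd d n).
Local Notation l1dist := (l1dist d n).
Local Notation ssum := (ssum d n).

Definition upd (x : pt) (i : 'I_d) (v : nat) : pt :=
  [ffun j => if j == i then (inord v : 'I_n.+2) else x j].

Lemma upd_i (x : pt) (i : 'I_d) v : v <= n.+1 -> (upd x i v i : nat) = v.
Proof. by move=> h; rewrite /upd ffunE eqxx inordK. Qed.

Lemma upd_j (x : pt) (i j : 'I_d) v : j != i -> upd x i v j = x j.
Proof. by move=> h; rewrite /upd ffunE (negbTE h). Qed.

Lemma l1_eq (x y : pt) (i : 'I_d) : (forall j, j != i -> x j = y j) ->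
  l1dist x y = ((x i - y i) + (y i - x i))%N.
Proof.
move=> h; rewrite /l1dist (bigD1 i) //= big1 ?addn0 // => j /h ->; lia.
Qed.

Lemma l1_ge (x y : pt) (i : 'I_d) : ((x i - y i) + (y i - x i) <= l1dist x y)%N.
Proof. by rewrite /l1dist (bigD1 i) //= leq_addr. Qed.

Lemma l1_sym (x y : pt) : l1dist x y = l1dist y x.
Proof. by apply: eq_bigr => j _; rewrite addnC. Qed.

Lemma ssum_eq (x y : pt) (i : 'I_d) : (forall j, j != i -> x j = y j) ->
  (ssum x + y i = ssum y + x i)%N.
Proof.
move=> h; rewrite /ssum (bigD1 i) //= [in RHS](bigD1 i) //=.
have E : \sum_(j < d | j != i) (x j : nat) = \sum_(j < d | j != i) (y j : nat).
  by apply: eq_bigr => j /h ->.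
move: E; set A := \sum_(j < d | j != i) (x j : nat); set B := \sum_(j < d | j != i) (y j : nat).
move=> E; rewrite E; lia.
Qed.

Lemma l1_one (x y : pt) : l1dist x y = 1%N -> exists i,
  (forall j, j != i -> x j = y j) /\
  ((y i : nat) = x i + 1 \/ (x i : nat) = y i + 1)%N.
Proof.
move=> h.
case: (pickP (fun i => ((x i - y i) + (y i - x i))%N != 0%N)) => [i hi|h0]; last first.
  move: h; rewrite /l1dist big1 // => j _; exact/eqP/negbFE/h0.
exists i.
move: h; rewrite /l1dist (bigD1 i) //=.
set S := (X in (_ + X)%N) => h.
have hr : (S == 0)%N by apply/eqP; move: hi h; clearbody S; lia.
move: hr; rewrite /S sum_nat_eq0 => /forallP hr; split.
  move=> j hj; move: (hr j); rewrite hj /= => /eqP hj0; apply/val_inj; simpl; lia.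
lia.
Qed.

Lemma inD_notBd (x : pt) : inD x -> ~~ inBd x.
Proof.
move=> hx; apply/negP => /andP[_ /forallP /(_ x)]; rewrite hx /= /l1dist big1 //.
move=> j _; lia.
Qed.

Lemma notD (x : pt) : ~~ inD x -> exists i, (x i : nat) = 0%N \/ (x i : nat) = n.+1.
Proof.
move/forallPn => [i hi]; exists i; have := ltn_ord (x i); move: hi; lia.
Qed.

Lemma inDP (x : pt) : (forall j, 1 <= x j <= n)%N -> inD x.
Proof. by move=> h; apply/forallP. Qed.

Lemma inDE (x : pt) (j : 'I_d) : inD x -> (1 <= x j <= n)%N.
Proof. by move/forallP. Qed.

Lemma max_n1 (x : pt) (i : 'I_d) : (x i : nat) = n.+1 -> (\max_(j < d) (x j : nat) == n.+1)%N.
Proof.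
move=> h; rewrite eqn_leq; apply/andP; split.
  by apply/bigmax_leqP => j _; rewrite -ltnS ltn_ord.
by apply: leq_trans (leq_bigmax_cond (F := fun j => (x j : nat)) i isT); rewrite h.
Qed.

End H.
Arguments upd {d n}. Arguments upd_i {d n}. Arguments upd_j {d n}.
Arguments l1_eq {d n x y i}. Arguments l1_ge {d n}. Arguments l1_sym {d n}.
Arguments ssum_eq {d n x y i}. Arguments l1_one {d n x y}. Arguments inD_notBd {d n x}.
Arguments notD {d n x}. Arguments inDP {d n x}. Arguments inDE {d n x} j. Arguments max_n1 {d n x i}.

Local Open Scope ring_scope.

Theorem lemma3p1 (R : realFieldType) (d n t : nat)
  (gamma : pt d n -> pt d n -> R) (u : pt d n -> R) :
  (2 <= d)%N -> (1 <= n)%N -> (d <= t <= d * n)%N ->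
  (forall p q, edge d n p q -> gamma p q = gamma q p) ->
  (forall p q, edge d n p q -> 0 < gamma p q) ->
  (forall p, inL d n t.-1 p ->
     \sum_(q | edge d n p q) gamma p q * (u q - u p) = 0) ->
  (forall b, inJ d n t.-1 b -> u b = 0) ->
  (forall b, inJ d n t.-1 b -> forall q, edge d n b q ->
     gamma b q * (u q - u b) = 0) ->
  forall p, inL d n t p || inJ d n t.-1 p -> u p = 0.
Proof.
move=> hd hn /andP[htd htn] gsym gpos heq hJ hbd p /orP[/andP[pD0 ps0] | pJ]; last exact: hJ.
have t0 : (0 < t)%N by lia.
have hJb : forall b x, inJ d n t.-1 b -> edge d n b x -> u x = 0.
  move=> b x hb hbx; have := hbd b hb x hbx; rewrite (hJ b hb) subr0 => /eqP.
  by rewrite mulf_eq0 (gt_eqF (gpos _ _ hbx)) /= => /eqP.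
have d0 : (0 < d)%N by lia.
pose i0 := Ordinal d0.
pose m (x : pt d n) := (ssum d n x * n.+2 + x i0)%N.
suff main : forall k x, (m x < k)%N -> inD d n x -> (ssum d n x <= t)%N -> u x = 0.
  exact: (main (m p).+1 p (ltnSn _) pD0 ps0).
clear pD0 ps0 p.
elim=> [//|k IH] x mx xD xs.
have xi0 := inDE i0 xD.
have notDB : forall q : pt d n, inV d n q -> ~~ inD d n q -> inBd d n q.
  by move=> q /orP[->|].
case: (ltnP 1 (x i0)) => h.
- pose p := upd x i0 (x i0).-1.
  have pi0 : (p i0 : nat) = (x i0).-1 by rewrite upd_i //; lia.
  have pj : forall j, j != i0 -> p j = x j by move=> j; exact: upd_j.
  have pD : inD d n p.
    apply: inDP => j; case: (eqVneq j i0) => [->|/pj ->]; last exact: inDE.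
    rewrite pi0; lia.
  have ps' := ssum_eq pj.
  have mp : (m p < m x)%N by rewrite /m; nia.
  have up : u p = 0 by apply: IH pD _; lia.
  have epx : edge d n p x.
    rewrite /edge /inV pD xD /= (l1_eq pj) (negbTE (inD_notBd pD)) /= andbT.
    apply/eqP; lia.
  have pL : inL d n t.-1 p by rewrite /inL pD; lia.
  have := heq p pL.
  rewrite (bigD1 x) //= big1 ?addr0 => [|q /andP[epq qx]].
    by rewrite up subr0 => /eqP; rewrite mulf_eq0 (gt_eqF (gpos _ _ epx)) => /eqP.
  suff -> : u q = 0 by rewrite up subrr mulr0.
  move: (epq) => /and4P[_ qV /eqP l1pq _].
  have [i [hij hi]] := l1_one l1pq.
  have sq := ssum_eq hij.
  have qlt := ltn_ord (q i).
  have pDi := inDE i pD.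
  case: hi => hi.
  + case: (eqVneq (q i : nat) n.+1) => hqn.
    * apply: hJ; rewrite /inJ; apply/orP; right; apply/existsP.
      have hl : (ssum d n q < t.-1.+2)%N by lia.
      exists (Ordinal hl); rewrite /inKp /= eqxx (max_n1 hqn) andbT.
      rewrite andbT; apply: notDB qV _; apply/negP => qD; have := inDE i qD; lia.
    * have qD : inD d n q.
        apply: inDP => j; case: (eqVneq j i) => [->|/hij <-]; last exact: inDE.
        lia.
      case: (eqVneq i i0) => hii0.
      - exfalso; move/eqP: qx; apply; apply/ffunP => j.
        case: (eqVneq j i0) => [->|hj].
          apply/val_inj => /=; rewrite -hii0; move: hi; rewrite hii0 pi0; lia.
        by rewrite -(hij j) ?hii0 // pj.
      - apply: IH qD _.
          have := hij i0; rewrite eq_sym hii0 => /(_ isT) hq0.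
          have : (m q < m x)%N by rewrite /m -hq0; nia.
          lia.
        lia.
  + case: (eqVneq (q i : nat) 0%N) => hq0.
    * apply: hJ; rewrite /inJ; apply/orP; left; apply/existsP.
      have hl : (ssum d n q < t.-1.+1)%N by lia.
      exists (Ordinal hl); rewrite /inKm /= eqxx /=.
      apply/andP; split; last by apply/existsP; exists i; rewrite hq0.
      apply: notDB qV _; apply/negP => qD; have := inDE i qD; lia.
    * have qD : inD d n q.
        apply: inDP => j; case: (eqVneq j i) => [->|/hij <-]; last exact: inDE.
        lia.
      apply: IH qD _; last by lia.
      have qi0 := ltn_ord (q i0).
      have : (m q < m x)%N by rewrite /m; nia.
      lia.
- pose b := upd x i0 0.
  have bi0 : (b i0 : nat) = 0%N by rewrite upd_i.
  have bj : forall j, j != i0 -> b j = x j by move=> j; exact: upd_j.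
  have xnB := inD_notBd xD.
  have l1bx : l1dist d n b x = 1%N by rewrite (l1_eq bj) bi0; lia.
  have bB : inBd d n b.
    apply/andP; split.
      by apply/existsP; exists x; rewrite xD l1_sym l1bx.
    apply/forallP => q; apply/implyP => qD.
    have := l1_ge q b i0; have := inDE i0 qD; rewrite bi0; lia.
  have sb := ssum_eq bj.
  apply: (hJb b).
    rewrite /inJ; apply/orP; left; apply/existsP.
    have hl : (ssum d n b < t.-1.+1)%N by lia.
    exists (Ordinal hl); rewrite /inKm bB eqxx /=.
    by apply/existsP; exists i0; rewrite bi0.
  by rewrite /edge /inV bB xD orbT l1bx eqxx /= (negbTE xnB) //=.
Qed.
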